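(* Assume the Bellman setting below and hypotheses (H3) and (H4). Let $U$ be a solution of the Bellman problem. Then there exists a sequence $(P^\ell)_\ell$ in $\mathcal P$ such that $-A(P^\ell)U+y(P^\ell)\to0$ as $\ell\to\infty$ and $A(P^\ell)$ is a nonsingular M-matrix for every $\ell$.
   Context: Bellman setting: Let $M\ge 0$ be an integer and $\mathcal P=\mathcal P_0\times\cdots\times\mathcal P_M$ a product of nonempty sets; write $P=(P_0,\dots,P_M)\in\mathcal P$. Let $A:\mathcal P\to\mathbb R^{(M+1)\times(M+1)}$ and $y:\mathcal P\to\mathbb R^{M+1}$ be row-decoupled: for each $i$, the $i$-th row of $A(P)$ and the $i$-th entry of $y(P)$ depend only on $P_i$. Inequalities between vectors are entrywise and suprema of families of vectors are entrywise. The Bellman problem is to find $U$ with $\sup_{P\in\mathcal P}\{-A(P)U+y(P)\}=0$. Row $i$ of a matrix $(a_{ij})$ is strictly diagonally dominant (s.d.d.) if $|a_{ii}|>\sum_{j\ne i}|a_{ij}|$, weakly diagonally dominant (w.d.d.) if $|a_{ii}|\ge\sum_{j\ne i}|a_{ij}|$; a matrix is w.d.d. if all rows are. A Z-matrix is a real matrix with nonpositive off-diagonal entries; a nonsingular M-matrix is a Z-matrix that is nonsingular with entrywise nonnegative inverse. (H3): for each $P$, $A(P)$ is a w.d.d. Z-matrix with nonnegative diagonal entries, and $[A(P)]_{ii}\le1$ whenever row $i$ of $A(P)$ is not s.d.d. Define $[\hat y(P)]_i=[y(P)]_i$ if row $i$ of $A(P)$ is not s.d.d. and $[\hat y(P)]_i=-\infty$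 otherwise, and the operator $\mathbb M$ on vectors with entries in $[-\infty,\infty)$ by $[\mathbb M X]_i=\sup_{P\in\mathcal P}\{(1-[A(P)]_{ii})X_i-\sum_{j\ne i}[A(P)]_{ij}X_j+[\hat y(P)]_i\}$, with the conventions $0\cdot(-\infty)=0$ and that any sum containing $-\infty$ equals $-\infty$; $\mathbb M^0=I$, $\mathbb M^k=\mathbb M\circ\mathbb M^{k-1}$. (H4): for each $U\in\mathbb R^{M+1}$ and each $i$ there exist integers $0\le m_1<m_2$ with $[\mathbb M^{m_1}U]_i>[\mathbb M^{m_2}U]_i$. *)

(* Defs.v *)
From mathcomp Require Import all_boot.
From Stdlib Require Import Reals ClassicalEpsilon.
Set Implicit Arguments.
Unset Strict Implicit.
Open Scope R_scope.

Definition sumI (n : nat) (f : 'I_n -> R) : R :=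
  foldr (fun j acc => f j + acc) 0 (enum 'I_n).

Definition offdiag_abs_sum (n : nat) (a : 'I_n -> 'I_n -> R) (i : 'I_n) : R :=
  sumI (fun j => if j == i then 0 else Rabs (a i j)).

Definition sdd_row (n : nat) (a : 'I_n -> 'I_n -> R) (i : 'I_n) : Prop :=
  Rabs (a i i) > offdiag_abs_sum a i.
Definition wdd_row (n : nat) (a : 'I_n -> 'I_n -> R) (i : 'I_n) : Prop :=
  Rabs (a i i) >= offdiag_abs_sum a i.
Definition wdd_mx (n : nat) (a : 'I_n -> 'I_n -> R) : Prop :=
  forall i, wdd_row a i.

Definition Z_matrix (n : nat) (a : 'I_n -> 'I_n -> R) : Prop :=
  forall i j, i <> j -> a i j <= 0.

Definition mx_mul (n : nat) (a b : 'I_n -> 'I_n -> R) : 'I_n -> 'I_n -> R :=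
  fun i j => sumI (fun k => a i k * b k j).
Definition id_mx (n : nat) : 'I_n -> 'I_n -> R :=
  fun i j => if i == j then 1 else 0.

Definition nonsingular_M_matrix (n : nat) (a : 'I_n -> 'I_n -> R) : Prop :=
  Z_matrix a /\
  exists b : 'I_n -> 'I_n -> R,
    (forall i j, mx_mul a b i j = id_mx i j) /\
    (forall i j, mx_mul b a i j = id_mx i j) /\
    (forall i j, 0 <= b i j).

Definition residual (M : nat) (T : 'I_M.+1 -> Type)
  (A : (forall k, T k) -> 'I_M.+1 -> 'I_M.+1 -> R)
  (y : (forall k, T k) -> 'I_M.+1 -> R) (U : 'I_M.+1 -> R)
  (P : forall k, T k) (i : 'I_M.+1) : R :=
  - sumI (fun j => A P i j * U j) + y P i.

Definition bellman_solution (M : nat) (T : 'I_M.+1 -> Type)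
  (A : (forall k, T k) -> 'I_M.+1 -> 'I_M.+1 -> R)
  (y : (forall k, T k) -> 'I_M.+1 -> R) (U : 'I_M.+1 -> R) : Prop :=
  forall i, is_lub (fun x => exists P, x = residual A y U P i) 0.

Definition row_decoupled (M : nat) (T : 'I_M.+1 -> Type)
  (A : (forall k, T k) -> 'I_M.+1 -> 'I_M.+1 -> R)
  (y : (forall k, T k) -> 'I_M.+1 -> R) : Prop :=
  forall (P Q : forall k, T k) (i : 'I_M.+1),
    P i = Q i -> (forall j, A P i j = A Q i j) /\ y P i = y Q i.

Definition H3 (M : nat) (T : 'I_M.+1 -> Type)
  (A : (forall k, T k) -> 'I_M.+1 -> 'I_M.+1 -> R) : Prop :=
  forall P : forall k, T k,
    Z_matrix (A P) /\ wdd_mx (A P) /\ (forall i, 0 <= A P i i) /\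
    (forall i, ~ sdd_row (A P) i -> A P i i <= 1).

(* ---------- extended reals (with both infinities, for totality) ---------- *)
Inductive ER := ERfin (r : R) | ERpinf | ERminf.

Definition ER_le (x z : ER) : Prop :=
  match x, z with
  | ERminf, _ => True
  | _, ERpinf => True
  | ERfin a, ERfin b => a <= b
  | _, _ => False
  end.
Definition ER_lt (x z : ER) : Prop := ER_le x z /\ x <> z.

(* any sum containing -oo is -oo *)
Definition ER_plus (x z : ER) : ER :=
  match x, z with
  | ERminf, _ => ERminf
  | _, ERminf => ERminf
  | ERpinf, _ => ERpinf
  | _, ERpinf => ERpinf
  | ERfin a, ERfin b => ERfin (a + b)
  end.

(* real scalar times extended real, with 0 * (+-oo) = 0 *)
Definition ER_scal (c : R) (x : ER) : ER :=
  match x with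
  | ERfin a => ERfin (c * a)
  | ERminf => if Req_EM_T c 0 then ERfin 0 else if Rlt_dec 0 c then ERminf else ERpinf
  | ERpinf => if Req_EM_T c 0 then ERfin 0 else if Rlt_dec 0 c then ERpinf else ERminf
  end.

Definition ER_sumI (n : nat) (f : 'I_n -> ER) : ER :=
  foldr (fun j acc => ER_plus (f j) acc) (ERfin 0) (enum 'I_n).

Definition is_sup_ER (S : ER -> Prop) (s : ER) : Prop :=
  (forall z, S z -> ER_le z s) /\
  (forall b, (forall z, S z -> ER_le z b) -> ER_le s b).

Definition ER_sup (S : ER -> Prop) : ER :=
  epsilon (inhabits ERminf) (is_sup_ER S).

(* (1 - a_ii) X_i - sum_{j<>i} a_ij X_j + yhat_i, with yhat_i = -oo on s.d.d. rows *)
Definition Mterm (M : nat) (T : 'I_M.+1 -> Type)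
  (A : (forall k, T k) -> 'I_M.+1 -> 'I_M.+1 -> R)
  (y : (forall k, T k) -> 'I_M.+1 -> R) (X : 'I_M.+1 -> ER)
  (P : forall k, T k) (i : 'I_M.+1) : ER :=
  if Rlt_dec (offdiag_abs_sum (A P) i) (Rabs (A P i i)) then ERminf
  else ER_plus (ER_scal (1 - A P i i) (X i))
         (ER_plus (ER_sumI (fun j => if j == i then ERfin 0
                                     else ER_scal (- A P i j) (X j)))
                  (ERfin (y P i))).

Definition Mop (M : nat) (T : 'I_M.+1 -> Type)
  (A : (forall k, T k) -> 'I_M.+1 -> 'I_M.+1 -> R)
  (y : (forall k, T k) -> 'I_M.+1 -> R) (X : 'I_M.+1 -> ER) : 'I_M.+1 -> ER :=
  fun i => ER_sup (fun z => exists P, z = Mterm A y X P i).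

Definition Miter (M : nat) (T : 'I_M.+1 -> Type)
  (A : (forall k, T k) -> 'I_M.+1 -> 'I_M.+1 -> R)
  (y : (forall k, T k) -> 'I_M.+1 -> R) (k : nat) (X : 'I_M.+1 -> ER) : 'I_M.+1 -> ER :=
  iter k (Mop A y) X.

Definition H4 (M : nat) (T : 'I_M.+1 -> Type)
  (A : (forall k, T k) -> 'I_M.+1 -> 'I_M.+1 -> R)
  (y : (forall k, T k) -> 'I_M.+1 -> R) : Prop :=
  forall (U : 'I_M.+1 -> R) (i : 'I_M.+1),
    exists m1 m2 : nat, (m1 < m2)%nat /\
      ER_lt (Miter A y m2 (fun j => ERfin (U j)) i)
            (Miter A y m1 (fun j => ERfin (U j)) i).

(* Main.v *)
Require Import Defs.
From mathcomp Require Import all_boot all_algebra.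
From mathcomp Require Import Rstruct.
From Stdlib Require Import Reals ClassicalEpsilon Lra Classical FunctionalExtensionality.
Open Scope R_scope.
Set Implicit Arguments.
Unset Strict Implicit.

Section LS.
Variable T : eqType.
Definition LS (f : T -> R) (s : seq T) : R := foldr (fun j acc => f j + acc) 0 s.

Lemma LS_ext f g s : (forall j, f j = g j) -> LS f s = LS g s.
Proof. move=> H; elim: s => //= x s IH; rewrite H IH; reflexivity. Qed.
Lemma LS_plus f g s : LS (fun j => f j + g j) s = LS f s + LS g s.
Proof. elim: s => /= [|x s IH]; [lra|rewrite IH; lra]. Qed.
Lemma LS_scal c f s : LS (fun j => c * f j) s = c * LS f s.
Proof. elim: s => /= [|x s IH]; [lra|rewrite IH; lra]. Qed.
Lemma LS_opp f s : LS (fun j => - f j) s = - LS f s.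
Proof. elim: s => /= [|x s IH]; [lra|rewrite IH; lra]. Qed.
Lemma LS_le f g s : (forall j, f j <= g j) -> LS f s <= LS g s.
Proof. move=> H; elim: s => /= [|x s IH]; [lra|]. have := H x; lra. Qed.
Lemma LS_zero s : LS (fun _ => 0) s = 0.
Proof. elim: s => /= [|x s IH]; [lra|rewrite IH; lra]. Qed.
Lemma LS_term f s j : (forall j, 0 <= f j) -> j \in s -> f j <= LS f s.
Proof.
move=> H; elim: s => //= x s IH; rewrite in_cons => /orP [/eqP ->|Hj].
- have: 0 <= LS f s by rewrite -(LS_zero s); apply: LS_le.
  lra.
- have := IH Hj; have := H x; lra.
Qed.
Lemma LS_notin f s i : i \notin s ->
  LS (fun j => if j == i then 0 else f j) s = LS f s.
Proof.
elim: s => //= x s IH; rewrite in_cons negb_or => /andP [Hx Hs].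
rewrite eq_sym (negbTE Hx) IH //.
Qed.
Lemma LS_split f s i : uniq s -> i \in s ->
  LS f s = f i + LS (fun j => if j == i then 0 else f j) s.
Proof.
elim: s => //= x s IH /andP [Hx Hu]; rewrite in_cons => /orP [/eqP ->|Hi].
- rewrite eqxx LS_notin //; lra.
- have Hxi : (x == i) = false.
    by apply/negbTE; apply/eqP => E; rewrite E Hi in Hx.
  rewrite Hxi (IH Hu Hi); lra.
Qed.
End LS.

Section SumI.
Variable n : nat.
Implicit Types f g : 'I_n -> R.
Lemma sumI_ext f g : (forall j, f j = g j) -> sumI f = sumI g.
Proof. move=> H; exact: (LS_ext _ H). Qed.
Lemma sumI_plus f g : sumI (fun j => f j + g j) = sumI f + sumI g.
Proof. exact: LS_plus. Qed.
Lemma sumI_scal c f : sumI (fun j => c * f j) = c * sumI f.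
Proof. exact: LS_scal. Qed.
Lemma sumI_opp f : sumI (fun j => - f j) = - sumI f.
Proof. exact: LS_opp. Qed.
Lemma sumI_le f g : (forall j, f j <= g j) -> sumI f <= sumI g.
Proof. move=> H; exact: (LS_le _ H). Qed.
Lemma sumI_zero : sumI (fun _ : 'I_n => 0) = 0.
Proof. exact: LS_zero. Qed.
Lemma sumI_term f j : (forall j, 0 <= f j) -> f j <= sumI f.
Proof. move=> H; have := @LS_term _ f (enum 'I_n) j H; rewrite mem_enum; apply; done. Qed.
Lemma sumI_split f i :
  sumI f = f i + sumI (fun j => if j == i then 0 else f j).
Proof. apply: LS_split; [exact: enum_uniq | by rewrite mem_enum]. Qed.
End SumI.

Lemma argmin_ex (T : eqType) (f : T -> R) (s : seq T) (d : T) :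
  exists m, f m <= f d /\ forall j, j \in s -> f m <= f j.
Proof.
elim: s => [|x s [m [Hm1 Hm2]]]; first by exists d; split => //; lra.
destruct (Rle_dec (f m) (f x)) as [H|H].
- exists m; split => // j; rewrite in_cons => /orP [/eqP ->|]; auto.
- exists x; split; first lra.
  move=> j; rewrite in_cons => /orP [/eqP ->|Hj]; [lra|].
  have := Hm2 j Hj; lra.
Qed.

Section MP.
Variables (n : nat) (a : 'I_n -> 'I_n -> R) (lv : 'I_n -> nat).
Hypothesis HZ : Z_matrix a.
Hypothesis Hw : wdd_mx a.
Hypothesis Hd : forall i, 0 <= a i i.
Hypothesis Hc : forall i, sdd_row a i \/
  exists j, j <> i /\ a i j <> 0 /\ Nat.lt (lv j) (lv i).

Lemma max_principle (x : 'I_n -> R) :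
  (forall i, 0 <= sumI (fun j => a i j * x j)) -> forall i, 0 <= x i.
Proof.
move=> Hx i0.
destruct (Rle_dec 0 (x i0)) as [H0|H0]; first exact H0.
exfalso.
have [m [Hm1 Hm2]] := argmin_ex x (enum 'I_n) i0.
have Hmin : forall j, x m <= x j by move=> j; apply: Hm2; rewrite mem_enum.
set c := - x m.
have Hcpos : 0 < c by rewrite /c; lra.
suff: forall k i, lv i = k -> x i <> x m by move=> /(_ _ m erefl); auto.
induction k as [k IH] using (well_founded_induction Wf_nat.lt_wf); move=> i Hk Hxi.
have Hs := Hx i.
rewrite (sumI_split _ i) in Hs.
set d := fun j => if j == i then 0 else c * Rabs (a i j) - a i j * x j.
have Hdnn : forall j, 0 <= d j.
  move=> j; rewrite /d; case: eqP => [_|Hji]; first lra.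
  have Ha := HZ (not_eq_sym Hji).
  rewrite Rabs_left1 //.
  have := Hmin j; rewrite /c => Hj.
  rewrite /c.
  have : 0 <= (- a i j) * (- x m + x j) by apply: Rmult_le_pos; lra.
  nra.
have Hdsum : sumI d = c * offdiag_abs_sum a i -
    sumI (fun j => if j == i then 0 else a i j * x j).
  rewrite /offdiag_abs_sum /Rminus -sumI_scal -sumI_opp -sumI_plus.
  apply: sumI_ext => j; rewrite /d; case: (j == i); ring.
have Hdge : 0 <= sumI d.
  rewrite -(@sumI_zero n); apply: sumI_le; exact: Hdnn.
have Hwi := Hw i; rewrite /wdd_row Rabs_pos_eq in Hwi; last exact: Hd.
rewrite Hxi in Hs.
have key : sumI d <= - (c * (a i i - offdiag_abs_sum a i)).
  have Hcx : x m = - c by rewrite /c; ring.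
  rewrite Hcx in Hs.
  move: Hs Hdsum; clearbody c d; move=> Hs Hdsum.
  have -> : c * (a i i - offdiag_abs_sum a i) = c * a i i - c * offdiag_abs_sum a i by ring.
  replace (a i i * - c) with (- (c * a i i)) in Hs by ring.
  lra.
case: (Hc i) => [Hsdd|[j [Hji [Haij Hlt]]]].
- rewrite /sdd_row Rabs_pos_eq in Hsdd; last exact: Hd.
  have : 0 < c * (a i i - offdiag_abs_sum a i) by apply: Rmult_lt_0_compat; lra.
  lra.
- have Hdj : d j <= sumI d by apply: sumI_term.
  have Hdj0 : d j = 0.
    have : sumI d <= 0.
      have: 0 <= c * (a i i - offdiag_abs_sum a i) by apply: Rmult_le_pos; lra.
      lra.
    have := Hdnn j; lra.
  have Hjn : (j == i) = false by apply/eqP.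
  rewrite /d Hjn in Hdj0.
  have Ha := HZ (not_eq_sym Hji).
  rewrite Rabs_left1 // in Hdj0.
  have Hne : a i j < 0 by destruct (Rle_lt_or_eq_dec _ _ (HZ (not_eq_sym Hji))); auto; congruence.
  apply: (IH (lv j)); [rewrite -Hk; exact: Hlt| reflexivity |].
  have : (- a i j) * (c + x j) = 0 by rewrite -Hdj0; ring.
  move=> /Rmult_integral [H1|H1]; [lra|rewrite /c in H1; lra].
Qed.
End MP.
Section Big.
Local Open Scope ring_scope.
Lemma sumI_big n (f : 'I_n -> R) : sumI f = \sum_j f j.
Proof.
rewrite /sumI.
have -> : foldr (fun j acc => Rplus (f j) acc) R0 (enum 'I_n) =
   \sum_(j <- enum 'I_n) f j.
  elim: (enum 'I_n) => [|x s IH]; first by rewrite big_nil.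
  by rewrite big_cons /= IH.
rewrite big_enum /=.
by apply: eq_bigl.
Qed.
End Big.

Lemma wcdd_M n (a : 'I_n -> 'I_n -> R) (lv : 'I_n -> nat)
  (HZ : Z_matrix a) (Hw : wdd_mx a) (Hd : forall i, 0 <= a i i)
  (Hc : forall i, sdd_row a i \/
     exists j, j <> i /\ a i j <> 0 /\ Nat.lt (lv j) (lv i)) :
  nonsingular_M_matrix a.
Proof.
split; first exact HZ.
have MP := max_principle HZ Hw Hd Hc.
pose Am : 'M[R]_n := matrix_of_fun matrix_key (fun i j => a i j).
have inj : forall x : 'I_n -> R,
    (forall i, sumI (fun j => a i j * x j) = 0) -> forall i, x i = 0.
  move=> x Hx i; apply: Rle_antisym.
  - have H := MP (fun j => - x j) _ i.
    have : 0 <= - x i.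
      apply: H => k; rewrite (sumI_ext (g := fun j => - (a k j * x j))); last by move=> j; ring.
      rewrite sumI_opp Hx; lra.
    lra.
  - apply: MP => k; rewrite Hx; lra.
have Hunit : Am \in unitmx.
  rewrite unitmxE GRing.unitfE -det_tr; apply/negP => /det0P [v Hv0 Hv].
  move/negP: Hv0; apply; apply/eqP/rowP => j; rewrite !mxE.
  have := inj (fun j => v ord0 j) _ j; apply.
  move=> i; rewrite sumI_big.
  transitivity (mulmx v (trmx Am) ord0 i); last by rewrite Hv mxE.
  rewrite mxE; apply: eq_bigr => k _; rewrite !mxE; exact: Rmult_comm.
pose B := invmx Am.
have HAB : mulmx Am B = scalar_mx (GRing.one R) by apply: mulmxV.
have HBA : mulmx B Am = scalar_mx (GRing.one R) by apply: mulVmx.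
have Hid : forall i j, (scalar_mx (GRing.one R) : 'M[R]_n) i j = id_mx i j.
  by move=> i j; rewrite !mxE /id_mx; case: (i == j).
exists (fun i j => B i j); split; [|split].
- move=> i j; rewrite /mx_mul sumI_big -Hid -HAB mxE.
  by apply: eq_bigr => k _; rewrite !mxE.
- move=> i j; rewrite /mx_mul sumI_big -Hid -HBA mxE.
  by apply: eq_bigr => k _; rewrite !mxE.
- move=> i j; apply: (MP (fun k => B k j)) => k.
  have -> : sumI (fun l => a k l * B l j) = id_mx k j.
    rewrite sumI_big -Hid -HAB mxE.
    by apply: eq_bigr => l _; rewrite !mxE.
  rewrite /id_mx; case: (k == j); lra.
Qed.

Lemma ER_sup_ex (S : ER -> Prop) : exists s, is_sup_ER S s.
Proof.
destruct (classic (S ERpinf \/ forall r, exists a, S (ERfin a) /\ r < a)) as [H|H].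
- exists ERpinf; split; first by case.
  move=> b Hb; case: H => [Hp|Hu]; first exact: Hb _ Hp.
  case: b Hb => [r||] Hb //=.
  + destruct (Hu r) as [a [Ha Hra]]; have := Hb _ Ha; simpl; lra.
  + destruct (Hu 0) as [a [Ha _]]; exact: Hb _ Ha.
- apply not_or_and in H; destruct H as [Hnp Hb].
  apply not_all_ex_not in Hb; destruct Hb as [r Hr].
  destruct (classic (exists a, S (ERfin a))) as [[a0 Ha0]|Hne].
  + destruct (completeness (fun a => S (ERfin a))) as [l [Hl1 Hl2]].
    * exists r => a Ha; apply: Rnot_lt_le => Hra; apply: Hr; exists a; split => //.
    * by exists a0.
    exists (ERfin l); split.
    * case => [a||] Ha /=; [exact: Hl1 Ha | exact: Hnp Ha | exact I].
    * case=> [b||] Hb /=; [|exact I|exact: (Hb _ Ha0)].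
      apply: Hl2 => a Ha; exact: (Hb _ Ha).
  + exists ERminf; split => //.
    case=> [a||] Ha /=; [exact: Hne (ex_intro _ a Ha) | exact: Hnp Ha | exact I].
Qed.

Lemma ER_sup_spec S : is_sup_ER S (ER_sup S).
Proof. rewrite /ER_sup; apply: epsilon_spec; exact: ER_sup_ex. Qed.

Lemma ER_le_refl x : ER_le x x.
Proof. case: x => //= r; lra. Qed.

Lemma ER_le_trans x z w : ER_le x z -> ER_le z w -> ER_le x w.
Proof. case: x => [a||]; case: z => [b||]; case: w => [c||] //=; lra. Qed.

Lemma ER_lt_nle x z : ER_lt x z <-> ~ ER_le z x.
Proof.
rewrite /ER_lt; case: x => [a||]; case: z => [b||] /=; split.
all: first [ tauto
  | (move=> [H1 H2] H3; apply: H2; f_equal; lra)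
  | (move=> H; split; [lra | move=> [E]; lra])
  | (move=> [_ H]; exfalso; exact: H erefl)
  | (move=> _; split => //; discriminate) ].
Qed.

Lemma ER_plus_mono x x' z z' : ER_le x x' -> ER_le z z' ->
  ER_le (ER_plus x z) (ER_plus x' z').
Proof.
case: x => [a||]; case: x' => [a'||]; case: z => [b||]; case: z' => [b'||] //=; lra.
Qed.

Lemma ER_scal0 x : ER_scal 0 x = ERfin 0.
Proof.
case: x => [a||] /=; first by rewrite Rmult_0_l.
all: by case: Req_EM_T.
Qed.

Lemma ER_scal_mono c x x' : 0 <= c -> ER_le x x' -> ER_le (ER_scal c x) (ER_scal c x').
Proof.
move=> Hc; case: x => [a||]; case: x' => [a'||] //= H;
  repeat (case: Req_EM_T => ? //=); repeat (case: Rlt_dec => ? //=);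
  try nra; try lra.
Qed.

Lemma ER_foldr_mono (I : Type) (f g : I -> ER) (s : seq I) :
  (forall j, ER_le (f j) (g j)) ->
  ER_le (foldr (fun j acc => ER_plus (f j) acc) (ERfin 0) s)
        (foldr (fun j acc => ER_plus (g j) acc) (ERfin 0) s).
Proof.
move=> H; elim: s => [|x s IH] /=; first lra.
exact: ER_plus_mono.
Qed.

Lemma ER_sumI_mono n (f g : 'I_n -> ER) :
  (forall j, ER_le (f j) (g j)) -> ER_le (ER_sumI f) (ER_sumI g).
Proof. exact: ER_foldr_mono. Qed.

Lemma ER_sumI_fin n (g : 'I_n -> R) :
  ER_sumI (fun j => ERfin (g j)) = ERfin (sumI g).
Proof.
rewrite /ER_sumI /sumI; elim: (enum 'I_n) => [|x s IH] //=.
by rewrite IH.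
Qed.

Section Main.
Variables (M : nat) (T : 'I_M.+1 -> Type)
  (A : (forall k, T k) -> 'I_M.+1 -> 'I_M.+1 -> R)
  (y : (forall k, T k) -> 'I_M.+1 -> R).
Hypothesis HH3 : H3 A.

Lemma Mterm_mono (X X' : 'I_M.+1 -> ER) P i :
  (forall j, j = i \/ A P i j <> 0 -> ER_le (X j) (X' j)) ->
  ER_le (Mterm A y X P i) (Mterm A y X' P i).
Proof.
move=> H; rewrite /Mterm; case: Rlt_dec => Hs; first exact I.
have [HZ [_ [_ H1]]] := HH3 P.
have Hii : A P i i <= 1 by apply: H1.
apply: ER_plus_mono.
  apply: ER_scal_mono; [lra | apply: H; by left].
apply: ER_plus_mono; last exact: ER_le_refl.
apply: ER_sumI_mono => j; case: eqP => Hji; first exact: ER_le_refl.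
destruct (Req_EM_T (A P i j) 0) as [E|E].
  rewrite E Ropp_0 !ER_scal0; exact: ER_le_refl.
apply: ER_scal_mono.
  have := HZ i j (not_eq_sym Hji); lra.
apply: H; by right.
Qed.

Lemma Mterm_U (U : 'I_M.+1 -> R) P i : ~ sdd_row (A P) i ->
  Mterm A y (fun j => ERfin (U j)) P i = ERfin (U i + residual A y U P i).
Proof.
move=> Hs; rewrite /Mterm; case: Rlt_dec => Hlt; first by exfalso; apply: Hs.
have -> : (fun j => if j == i then ERfin 0 else ER_scal (- A P i j) (ERfin (U j)))
   = (fun j => ERfin (if j == i then 0 else - A P i j * U j)).
  by apply: functional_extensionality => j; case: (j == i).
rewrite ER_sumI_fin /= /residual (sumI_split (fun j => A P i j * U j) i) /=.
rewrite (sumI_ext (f := fun j => if j == i then 0 else - A P i j * U j)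
                  (g := fun j => - (if j == i then 0 else A P i j * U j))); last first.
  by move=> j; case: (j == i); ring.
rewrite sumI_opp; f_equal; ring.
Qed.

Lemma Mterm_Mop X P i : ER_le (Mterm A y X P i) (Mop A y X i).
Proof. have [H _] := ER_sup_spec (fun z => exists P, z = Mterm A y X P i). apply: H; by exists P. Qed.

Lemma Mop_le X i b : (forall P, ER_le (Mterm A y X P i) b) -> ER_le (Mop A y X i) b.
Proof.
move=> H; have [_ H2] := ER_sup_spec (fun z => exists P, z = Mterm A y X P i).
apply: H2 => z [P ->]; exact: H.
Qed.

Variable U : 'I_M.+1 -> R.
Hypothesis HU : bellman_solution A y U.

Lemma res_le0 P i : residual A y U P i <= 0.
Proof. have [H _] := HU i; apply: H; by exists P. Qed.

Lemma Mterm_U_le P i : ER_le (Mterm A y (fun j => ERfin (U j)) P i) (ERfin (U i)).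
Proof.
destruct (classic (sdd_row (A P) i)) as [Hs|Hs].
  by rewrite /Mterm; case: Rlt_dec.
rewrite Mterm_U //=; have := res_le0 P i; lra.
Qed.

Definition UE := fun j => ERfin (U j).

Lemma Miter_le k j : ER_le (Miter A y k UE j) (UE j).
Proof.
elim: k j => [|k IH] j; first exact: (ER_le_refl (UE j)).
rewrite /Miter /=; apply: Mop_le => P; apply: ER_le_trans (Mterm_U_le P j).
apply: Mterm_mono => l _; exact: IH.
Qed.

Definition Nset k j := ER_lt (Miter A y k UE j) (UE j).

Lemma min_ex (Q : nat -> Prop) : (exists k, Q k) ->
  exists k, Q k /\ forall m, Nat.lt m k -> ~ Q m.
Proof.
move=> [k Hk]; induction k as [k IH] using (well_founded_induction Wf_nat.lt_wf).
destruct (classic (exists m, Nat.lt m k /\ Q m)) as [[m [Hm Qm]]|Hn].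
  exact: IH Hm Qm.
exists k; split => // m Hm Qm; apply: Hn; by exists m.
Qed.

Hypothesis HH4 : H4 A y.

Lemma Nset_ex i : exists k, Nset k i.
Proof.
have [m1 [m2 [_ H]]] := HH4 U i.
exists m2; rewrite /Nset ER_lt_nle => Hle.
move: H; rewrite ER_lt_nle; apply.
exact: ER_le_trans (Miter_le m1 i) Hle.
Qed.

Lemma level_ex : exists lv : 'I_M.+1 -> nat, forall i,
  Nset (lv i) i /\ forall m, Nat.lt m (lv i) -> ~ Nset m i.
Proof.
have H := fun i => min_ex (Nset_ex i).
exists (fun i => proj1_sig (constructive_indefinite_description _ (H i))).
move=> i; exact: (proj2_sig (constructive_indefinite_description _ (H i))).
Qed.

Lemma gap (lv : 'I_M.+1 -> nat)
  (Hlv : forall i, Nset (lv i) i /\ forall m, Nat.lt m (lv i) -> ~ Nset m i) i :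
  exists e, 0 < e /\ forall P, ~ sdd_row (A P) i -> - e < residual A y U P i ->
    exists j, j <> i /\ A P i j <> 0 /\ Nat.lt (lv j) (lv i).
Proof.
have [HN Hmin] := Hlv i.
destruct (lv i) as [|k] eqn:Ek.
  exfalso; move: HN; rewrite /Nset ER_lt_nle; apply; exact: ER_le_refl.
have key : forall P, ~ sdd_row (A P) i ->
    ~ (exists j, j <> i /\ A P i j <> 0 /\ Nat.lt (lv j) k.+1) ->
    ER_le (ERfin (U i + residual A y U P i)) (Miter A y k.+1 UE i).
  move=> P Hs Hne.
  rewrite -Mterm_U // /Miter /=.
  apply: ER_le_trans (Mterm_Mop _ _ _); apply: Mterm_mono => j Hj.
  apply: NNPP => Hnle.
  have HNj : Nset k j by rewrite /Nset ER_lt_nle.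
  destruct (classic (j = i)) as [Eji|Eji].
    subst j; exact: (Hmin k (Nat.lt_succ_diag_r k) HNj).
  case: Hj => [Eji'|Ha]; first by apply: Eji.
  apply: Hne; exists j; split => //; split => //.
  destruct (Nat.lt_ge_cases k (lv j)) as [Hlt|Hge].
    by exfalso; have [_ Hmj] := Hlv j; exact: Hmj k Hlt HNj.
  exact: (proj2 (Nat.lt_succ_r _ _) Hge).
move: HN key; rewrite /Nset ER_lt_nle.
case: (Miter A y k.+1 UE i) => [y0||] /= HN key.
- exists (U i - y0); split; first lra.
  move=> P Hs Hr; apply: NNPP => Hne.
  have := key P Hs Hne; simpl; lra.
- by exfalso; apply: HN.
- exists 1; split; first lra.
  move=> P Hs Hr; apply: NNPP => Hne; exact: key P Hs Hne.
Qed.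

End Main.

Lemma choiceT (X : Type) (Y : X -> Type) (Pr : forall x, Y x -> Prop) :
  (forall x, exists z, Pr x z) -> exists f : (forall x, Y x), forall x, Pr x (f x).
Proof.
move=> H; exists (fun x => proj1_sig (constructive_indefinite_description _ (H x))).
move=> x; exact: (proj2_sig (constructive_indefinite_description _ (H x))).
Qed.


Theorem lemma3p9 (M : nat) (T : 'I_M.+1 -> Type)
  (Tne : forall i, inhabited (T i))
  (A : (forall k, T k) -> 'I_M.+1 -> 'I_M.+1 -> R)
  (y : (forall k, T k) -> 'I_M.+1 -> R)
  (Hdec : row_decoupled A y)
  (HH3 : H3 A) (HH4 : H4 A y)
  (U : 'I_M.+1 -> R) (HU : bellman_solution A y U) :
  exists Pseq : nat -> (forall k, T k),
    (forall i, Un_cv (fun l => residual A y U (Pseq l) i) 0) /\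
    (forall l, nonsingular_M_matrix (A (Pseq l))).
Proof.
have [lv Hlv] := level_ex HH3 HU HH4.
have [e He] := choiceT (gap HH3 Hlv).
have Hnear : forall (l : nat) i, exists P,
    - Rmin (e i) (/ INR l.+1) < residual A y U P i.
  move=> l i.
  have dpos : 0 < Rmin (e i) (/ INR l.+1).
    apply: Rmin_pos; first by have [H _] := He i.
    apply: Rinv_0_lt_compat; apply: lt_0_INR; apply: Nat.lt_0_succ.
  apply: NNPP => Hn.
  have [_ Hl] := HU i.
  have : 0 <= - Rmin (e i) (/ INR l.+1).
    apply: Hl => x [P ->]; apply: Rnot_lt_le => Hlt; apply: Hn; by exists P.
  lra.
have [Pc HPc] := choiceT (fun l => choiceT (Hnear l)).
pose Pseq l := fun k => Pc l k k.
have Hrow : forall l i, A (Pseq l) i = A (Pc l i) i /\ y (Pseq l) i = y (Pc l i) i.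
  move=> l i; have [H1 H2] := Hdec (Pseq l) (Pc l i) i erefl.
  split => //; exact: functional_extensionality.
have Hres : forall l i, residual A y U (Pseq l) i = residual A y U (Pc l i) i.
  move=> l i; have [H1 H2] := Hrow l i; by rewrite /residual H1 H2.
exists Pseq; split.
- move=> i eps Heps.
  have [N [HN HNpos]] := @archimed_cor1 eps Heps.
  exists N => l Hl.
  rewrite /R_dist Rminus_0_r Hres Rabs_left1; last exact: res_le0.
  have H1 := HPc l i.
  have H2 := Rmin_r (e i) (/ INR l.+1).
  have H3' : / INR l.+1 <= / INR N.
    apply: Rinv_le_contravar; first by apply: lt_0_INR.
    apply: le_INR; apply: Nat.le_le_succ_r; exact: Hl.
  lra.
- move=> l; have [HZ [Hw [Hd _]]] := HH3 (Pseq l).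
  apply: (wcdd_M (lv := lv)) => // i.
  destruct (classic (sdd_row (A (Pseq l)) i)) as [Hs|Hs]; first by left.
  right; have [Hr _] := Hrow l i.
  rewrite /sdd_row /offdiag_abs_sum Hr in Hs.
  have [_ Hg] := He i.
  have [j [Hji [Ha Hlt]]] := Hg (Pc l i) Hs
     (Rle_lt_trans _ _ _ (Ropp_le_contravar _ _ (Rmin_l (e i) (/ INR l.+1))) (HPc l i)).
  by exists j; rewrite Hr.
Qed.
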